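(* Let $k$ be a nonnegative integer. Then there exist rational numbers $\xi_\nu$, indexed by integer partitions $\nu$ with $|\nu|\le k$, such that for every $m\ge0$ and all real numbers $a_0<a_1<\cdots<a_m$ and $b_1<b_2<\cdots<b_m$, $$\sum_{0\le i\le m}\frac{\prod_{1\le j\le m}(a_i-b_j)}{\prod_{0\le j\le m,\ j\ne i}(a_i-a_j)}\,a_i^k=\sum_{|\nu|\le k}\xi_\nu\, q_\nu(\{a_i\},\{b_i\}).$$
   Context: For numbers $a_0,\dots,a_m$ and $b_1,\dots,b_m$ and $k\ge0$, set $q_k(\{a_i\},\{b_i\})=\sum_{i=0}^m a_i^k-\sum_{i=1}^m b_i^k$. For an integer partition $\nu=(\nu_1,\dots,\nu_\ell)$ (a weakly decreasing finite sequence of positive integers, $|\nu|=\sum\nu_j$), set $q_\nu(\{a_i\},\{b_i\})=\prod_{j=1}^{\ell}q_{\nu_j}(\{a_i\},\{b_i\})$, with $q_\emptyset=1$. *)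

(* Defs.v *)
From HB Require Import structures.
From mathcomp Require Import all_boot all_order all_algebra.
Set Implicit Arguments. Unset Strict Implicit. Unset Printing Implicit Defensive.
Import Order.TTheory GRing.Theory Num.Theory.
Local Open Scope ring_scope.

Definition is_partition (nu : seq nat) : bool :=
  sorted geq nu && all (fun x => 0 < x)%N nu.

Fixpoint seqs_upto (n k : nat) : seq (seq nat) :=
  match n with
  | 0 => [:: [::]]
  | n'.+1 => [::] :: [seq x :: s | x <- iota 1 k, s <- seqs_upto n' k]
  end.

Definition partitions_upto (k : nat) : seq (seq nat) :=
  undup [seq nu <- seqs_upto k k | is_partition nu & (sumn nu <= k)%N].

Definition qk {R : pzRingType} (m : nat) (a b : nat -> R) (k : nat) : R :=
  \sum_(0 <= i < m.+1) a i ^+ k - \sum_(1 <= i < m.+1) b i ^+ k.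

Definition qpart {R : pzRingType} (m : nat) (a b : nat -> R) (nu : seq nat) : R :=
  \prod_(p <- nu) qk m a b p.

(* Main.v *)
Require Import Defs.
From HB Require Import structures.
From mathcomp Require Import all_boot all_order all_algebra.
From mathcomp Require Import zify ring.
From Stdlib Require Import FunctionalExtensionality.
Import Order.TTheory GRing.Theory Num.Theory.
Local Open Scope ring_scope.
Set Implicit Arguments. Unset Strict Implicit.

Section Ser.
Variable R : comNzRingType.
Implicit Types f g h : nat -> R.

Definition conv f g : nat -> R := fun k => \sum_(j < k.+1) f j * g (k - j)%N.

Lemma conv_poly f g N k : (k < N)%N ->
  conv f g k = ((\poly_(i < N) f i) * (\poly_(i < N) g i))`_k.
Proof.
move=> kN; rewrite coefM /conv; apply: eq_bigr => j _.
rewrite !coef_poly (leq_ltn_trans (leq_ord j) kN).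
by rewrite (leq_ltn_trans (leq_subr _ _) kN).
Qed.

Lemma coefM_eql (p p' q : {poly R}) k :
  (forall j, (j <= k)%N -> p`_j = p'`_j) -> (p * q)`_k = (p' * q)`_k.
Proof.
move=> H; rewrite !coefM; apply: eq_bigr => j _; rewrite H //.
by rewrite -ltnS.
Qed.

Lemma convA f g h k : conv (conv f g) h k = conv f (conv g h) k.
Proof.
rewrite (conv_poly _ _ (ltnSn k)) (conv_poly f _ (ltnSn k)).
rewrite (@coefM_eql _ (\poly_(i < k.+1) f i * \poly_(i < k.+1) g i)); last first.
  by move=> j jk; rewrite coef_poly ltnS jk -conv_poly // ltnS.
rewrite -mulrA mulrC [in RHS]mulrC.
apply: coefM_eql => j jk.
by rewrite -conv_poly ?ltnS // coef_poly ltnS jk.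
Qed.

Lemma convC f g k : conv f g k = conv g f k.
Proof. by rewrite !(conv_poly _ _ (ltnSn k)) mulrC. Qed.

Lemma convDr f g h k : conv f (fun n => g n + h n) k = conv f g k + conv f h k.
Proof. by rewrite /conv -big_split; apply: eq_bigr => j _; rewrite mulrDr. Qed.

Definition dz f : nat -> R := fun k => k%:R * f k.

Lemma dz_conv f g k : dz (conv f g) k = conv (dz f) g k + conv f (dz g) k.
Proof.
rewrite /dz /conv big_distrr -big_split; apply: eq_bigr => j _ /=.
have jk : (j <= k)%N by rewrite -ltnS.
rewrite -{1}(subnKC jk) natrD mulrDl; congr (_ + _); first by rewrite mulrA.
by rewrite mulrCA mulrA.
Qed.

Definition newton f Q := forall k, dz f k = conv f Q k.

Lemma newton_conv f g Qf Qg : newton f Qf -> newton g Qg ->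
  newton (conv f g) (fun n => Qf n + Qg n).
Proof.
move=> Hf Hg k; rewrite dz_conv convDr.
have -> : dz f = conv f Qf by apply: functional_extensionality.
have -> : dz g = conv g Qg by apply: functional_extensionality.
rewrite [conv (conv f g) Qg k]convA; congr (_ + _).
rewrite !convA.
have -> : conv Qf g = conv g Qf by apply: functional_extensionality => n; apply: convC.
by [].
Qed.
End Ser.


Section F.
Variable R : comNzRingType.
Definition Gs (a : R) : nat -> R := fun k => a ^+ k.
Definition Qa (a : R) : nat -> R := fun n => if n == 0%N then 0 else a ^+ n.
Definition Ps (b : R) : nat -> R := fun k => if k == 0%N then 1 else if k == 1%N then - b else 0.
Definition Qb (b : R) : nat -> R := fun n => if n == 0%N then 0 else - b ^+ n.

Lemma newton_G a : newton (Gs a) (Qa a).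
Proof.
move=> k; rewrite /dz /conv big_ord_recr /= subnn /Qa eqxx mulr0 addr0.
rewrite (eq_bigr (fun _ => a ^+ k)); last first.
  move=> j _ /=; rewrite subn_eq0 leqNgt ltn_ord /= /Gs -exprD subnKC //.
  exact: ltnW.
by rewrite sumr_const card_ord mulr_natl.
Qed.

Lemma newton_P b : newton (Ps b) (Qb b).
Proof.
case=> [|[|k]].
- by rewrite /dz /conv big_ord1 /Qb /= mul0r mulr0.
- rewrite /dz /conv big_ord_recr big_ord1 /Ps /Qb /=.
  by rewrite mulr0 addr0 subn0 expr1.
- rewrite /dz /conv /= big_ord_recl big_ord_recl big1; last first.
    by move=> j _; rewrite /Ps /= mul0r.
  rewrite /Ps /Qb /= mulr0 subn1 /= mul1r mulrN mulNr opprK addr0.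
  by rewrite subn0 [b ^+ k.+2]exprS addNr.
Qed.
End F.


Section S.
Variable F : fieldType.

Definition Lw (m : nat) (a b : nat -> F) (k : nat) : F :=
  \sum_(0 <= i < m.+1)
         ((\prod_(1 <= j < m.+1) (a i - b j))
          / (\prod_(0 <= j < m.+1 | j != i) (a i - a j)) * a i ^+ k).

Lemma key (c x a b S : F) k : x != a -> x ^+ k - a ^+ k = (x - a) * S ->
  c * (x - b) / (x - a) * x ^+ k = c * (x ^+ k + (a - b) * S) + a ^+ k * (c * (a - b) / (x - a)).
Proof.
move=> xa hS.
have -> : x ^+ k = (x - a) * S + a ^+ k by rewrite -hS subrK.
have xa0 : x - a != 0 by rewrite subr_eq0.
by field.
Qed.

Lemma Ccoef (a b : F) s : conv (Ps b) (Gs a) s = if s == 0%N then 1 else (a - b) * a ^+ s.-1.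
Proof.
case: s => [|s].
  by rewrite /conv big_ord1 /Ps /Gs /= mul1r expr0.
rewrite /conv big_ord_recl big_ord_recl big1; last by move=> j _; rewrite /Ps /= mul0r.
by rewrite /Ps /Gs /= subn0 subn1 /= mul1r addr0 exprS mulrBl mulNr.
Qed.

Lemma conv0 (f g : nat -> F) : conv f g 0 = f 0%N * g 0%N.
Proof. by rewrite /conv big_ord1. Qed.

Lemma step m (a b : nat -> F) k : (forall i, (i <= m)%N -> a i != a m.+1) ->
  Lw m.+1 a b k = conv (Lw m a b) (conv (Ps (b m.+1)) (Gs (a m.+1))) k
     + a m.+1 ^+ k * (Lw m.+1 a b 0 - Lw m a b 0).
Proof.
move=> hd.
set A := a m.+1; set B := b m.+1.
pose c i := (\prod_(1 <= j < m.+1) (a i - b j)) / (\prod_(0 <= j < m.+1 | j != i) (a i - a j)).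
pose W := (\prod_(1 <= j < m.+2) (A - b j)) / (\prod_(0 <= j < m.+2 | j != m.+1) (A - a j)).
pose X := \sum_(0 <= i < m.+1) c i * (A - B) / (a i - A).
suff H : forall k, Lw m.+1 a b k =
    conv (Lw m a b) (conv (Ps B) (Gs A)) k + A ^+ k * (X + W).
  rewrite H; congr (_ + _ * _).
  rewrite H expr0 mul1r conv0 Ccoef /= mulr1.
  by rewrite addrAC subrr add0r.
move=> n.
rewrite [Lw m.+1 a b n]/Lw big_nat_recr //=.
rewrite [in RHS]mulrDr addrA; congr (_ + _); last first.
  by rewrite mulrC.
rewrite (eq_big_nat _ _ (F2 := fun i => c i * (a i - B) / (a i - A) * a i ^+ n)); last first.
  move=> i /andP[_ im].
  rewrite big_nat_recr //= [\prod_(0 <= j < m.+2 | j != i) _]big_mkcond [\prod_(0 <= j < m.+2) _]big_nat_recr //=.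
  rewrite ifT; last by rewrite eq_sym neq_ltn im.
  rewrite -big_mkcond /c invfM !mulrA; congr (_ * _).
  by rewrite -!mulrA; congr (_ * _); rewrite mulrCA.
rewrite (eq_big_nat _ _ (F2 := fun i =>
   c i * (a i ^+ n + (A - B) * \sum_(t < n) a i ^+ (n.-1 - t) * A ^+ t)
   + A ^+ n * (c i * (A - B) / (a i - A)))); last first.
  move=> i /andP[_ im]; apply: key; first by apply: hd.
  exact: subrXX.
rewrite big_split /= -big_distrr /=; congr (_ + _).
rewrite convC {1}/conv big_ord_recl Ccoef /= mul1r subn0.
under eq_bigr do rewrite mulrDr.
rewrite big_split /=; congr (_ + _).
rewrite (eq_bigr (fun t : 'I_n => \sum_(0 <= i < m.+1) (A - B) * A ^+ t * (c i * a i ^+ (n.-1 - t)))); last first.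
  move=> t _; rewrite Ccoef /= /Lw big_distrr /=; apply: eq_bigr => i _.
  have -> : (n - t.+1 = n.-1 - t)%N by have := ltn_ord t; lia.
  by [].
rewrite exchange_big /=; apply: eq_bigr => i _.
rewrite big_distrr /= big_distrr /=; apply: eq_bigr => t _.
by ring.
Qed.
End S.


Section L.
Variable F : fieldType.

Lemma lagrange m (a b : nat -> F) :
  (forall i j, (i <= m)%N -> (j <= m)%N -> i != j -> a i != a j) ->
  Lw m a b 0 = 1.
Proof.
move=> hd.
pose r := index_iota 0 m.+1.
have memr l : (l \in r) = (l <= m)%N by rewrite mem_index_iota.
have ur : uniq r by apply: iota_uniq.
pose f := \prod_(1 <= j < m.+1) ('X - (b j)%:P).
pose l i := \prod_(j <- r | j != i) ('X - (a j)%:P).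
pose d i := \prod_(j <- r | j != i) (a i - a j).
pose P := \sum_(i <- r) (f.[a i] / d i) *: l i.
have dn0 i : (i <= m)%N -> d i != 0.
  move=> im; rewrite prodf_seq_neq0; apply/allP => j; rewrite memr => jm.
  by apply/implyP => ji; rewrite subr_eq0 hd // eq_sym.
have hl i k : (i <= m)%N -> (k <= m)%N -> (l i).[a k] = if k == i then d i else 0.
  move=> im km; rewrite horner_prod; case: eqP => [->|/eqP ki].
    by apply: eq_bigr => j _; rewrite hornerXsubC.
  apply/eqP; rewrite prodf_seq_eq0; apply/hasP; exists k; first by rewrite memr.
  by rewrite ki hornerXsubC subrr eqxx.
have hP k : (k <= m)%N -> P.[a k] = f.[a k].
  move=> km; rewrite horner_sum (bigD1_seq k) ?memr //= big1_seq; last first.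
    move=> i /andP[ik]; rewrite memr => im.
    by rewrite hornerZ hl // eq_sym (negbTE ik) mulr0.
  by rewrite addr0 hornerZ hl // eqxx mulfVK // dn0.
have sl i : (i <= m)%N -> size (l i) = m.+1.
  move=> im; rewrite /l -big_filter size_prod_XsubC size_filter.
  have e : size r = m.+1 by rewrite /r /index_iota size_iota subn0.
  have hc : count (predC (pred1 i)) r = m.
    have := count_predC (pred1 i) r.
    rewrite count_uniq_mem // memr im e /=; lia.
  by rewrite -hc.
have sf : size f = m.+1.
  by rewrite /f -big_filter size_prod_XsubC size_filter count_predT size_iota subn1.
have sP : (size P <= m.+1)%N.
  rewrite /P big_seq; apply: (big_ind (fun p : {poly F} => size p <= m.+1)%N).
  - by rewrite size_poly0.
  - move=> p q hp hq; apply: leq_trans (size_polyD _ _) _; by rewrite geq_max hp hq.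
  - move=> i; rewrite memr => im; apply: leq_trans (size_scale_leq _ _) _.
    by rewrite sl.
have fP : f = P.
  apply/eqP; rewrite -subr_eq0; apply/negPn/negP => hn.
  have hr : all (root (f - P)) (map a r).
    apply/allP => x /mapP[k]; rewrite memr => km ->.
    by rewrite rootE hornerD hornerN hP // subrr.
  have hu : uniq (map a r).
    rewrite map_inj_in_uniq // => i j; rewrite !memr => im jm hij.
    by case: (eqVneq i j) => // /(hd i j im jm); rewrite hij eqxx.
  have := max_poly_roots hn hr hu.
  rewrite size_map /r /index_iota size_iota subn0.
  have h1 : (size (f - P)%R <= m.+1)%N.
    apply: leq_trans (size_polyD _ _) _; by rewrite size_polyN sf geq_max leqnn sP.
  by move=> h2; have := leq_trans h2 h1; rewrite ltnn.
have hf : f`_m = 1.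
  have := monic_prod_XsubC (index_iota 1 m.+1) predT b.
  by move/monicP; rewrite lead_coefE sf.
rewrite -hf fP /P coef_sum /Lw; apply: eq_big_nat => i /andP[_ im].
have hli : (l i)`_m = 1.
  have := monic_prod_XsubC r (fun j => j != i) a.
  by move/monicP; rewrite lead_coefE sl.
rewrite coefZ hli mulr1 expr0 mulr1 /f horner_prod; congr (_ / _).
by apply: eq_bigr => j _; rewrite hornerXsubC.
Qed.
End L.


Section Esec.
Variable F : fieldType.

Definition dist m (a : nat -> F) :=
  forall i j, (i <= m)%N -> (j <= m)%N -> i != j -> a i != a j.

Definition Qm m (a b : nat -> F) : nat -> F :=
  fun n => if n == 0%N then 0 else qk m a b n.

Lemma newton_ext (f Q Q' : nat -> F) : (forall n, Q n = Q' n) -> newton f Q -> newton f Q'.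
Proof.
by move=> h; have -> : Q = Q' by apply: functional_extensionality.
Qed.

Lemma newton_L m (a b : nat -> F) : dist m a -> newton (Lw m a b) (Qm m a b).
Proof.
elim: m a b => [|m IH] a b hd.
  have -> : Lw 0 a b = Gs (a 0%N).
    apply: functional_extensionality => k.
    rewrite /Lw big_nat1 big_geq // big_mkcond big_nat1 /= div1r invr1 mul1r.
    by [].
  apply: newton_ext (newton_G _) => n.
  rewrite /Qa /Qm /qk; case: eqP => // _.
  by rewrite big_nat1 big_geq // subr0.
have hdm : dist m a by move=> i j im jm; apply: hd; apply: leqW.
have -> : Lw m.+1 a b = conv (Lw m a b) (conv (Ps (b m.+1)) (Gs (a m.+1))).
  apply: functional_extensionality => k.
  rewrite step; last by move=> i im; apply: hd; lia.
  by rewrite !lagrange // subrr mulr0 addr0.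
apply: newton_ext (newton_conv (IH a b hdm) (newton_conv (newton_P _) (newton_G _))).
move=> n; rewrite /Qm /Qb /Qa; case: eqP => _; first by rewrite !addr0.
rewrite /qk [\sum_(0 <= i < m.+2) _]big_nat_recr //= [\sum_(1 <= i < m.+2) _]big_nat_recr //=.
set x := \sum_(0 <= i < m.+1) _; set y := \sum_(1 <= i < m.+1) _.
rewrite opprD !addrA.
clearbody x y; ring.
Qed.
End Esec.


Section G.
Variable R : numFieldType.

Lemma newton_rec m (a b : nat -> R) k : dist m a ->
  Lw m a b k.+1 = (k.+1)%:R^-1 * \sum_(0 <= t < k.+1) Lw m a b t * qk m a b (k.+1 - t).
Proof.
move=> hd; have := newton_L b hd k.+1.
rewrite /dz /conv big_ord_recr /= subnn /Qm eqxx mulr0 addr0 => h.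
have nz : (k.+1)%:R != 0 :> R by rewrite pnatr_eq0.
rewrite -[LHS](mulKf nz) h big_mkord; congr (_ * _); apply: eq_bigr => t _.
by rewrite subn_eq0 leqNgt ltn_ord.
Qed.

Definition validT j (S : seq (rat * seq nat)) :=
  all (fun p => all (fun x => 0 < x)%N p.2 && (sumn p.2 == j)) S.

Lemma rep K : exists T : nat -> seq (rat * seq nat), forall j, (j <= K)%N ->
  validT j (T j) /\ forall m (a b : nat -> R), dist m a ->
    Lw m a b j = \sum_(p <- T j) ratr p.1 * qpart m a b p.2.
Proof.
elim: K => [|K [T IH]].
  exists (fun _ => [:: (1%Q, [::])]) => j; rewrite leqn0 => /eqP ->.
  split=> // m a b hd; rewrite lagrange // big_seq1 rmorph1 mul1r /qpart big_nil.
  by [].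
pose S := [seq (p.1 / (K.+1)%:R, ((K.+1 - t)%N :: p.2)) | t <- index_iota 0 K.+1, p <- T t].
exists (fun j => if j == K.+1 then S else T j) => j.
case: eqP => [->|/eqP jK] hj; last first.
  by apply: IH; move: hj jK; rewrite leq_eqVlt => /orP[/eqP -> /eqP //|].
split.
  apply/allP => q /allpairsPdep[t [p [ht hp ->]]] /=.
  move: ht; rewrite mem_index_iota => /andP[_ ht].
  have /andP[h1 /eqP h2] := allP (proj1 (IH t ht)) p hp.
  rewrite h1 h2 andbT /= subn_gt0 ht /=; apply/eqP; lia.
move=> m a b hd; rewrite newton_rec // big_allpairs_dep /= big_distrr /=.
apply: eq_big_nat => t /andP[_ ht].
rewrite (proj2 (IH t ht)) // big_distrl big_distrr /=; apply: eq_bigr => p _.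
rewrite /qpart big_cons rmorphM fmorphV /= (ratr_nat R).
ring.
Qed.
End G.


Lemma mem_seqs_upto n k s : (size s <= n)%N -> all (fun x => 0 < x <= k)%N s ->
  s \in seqs_upto n k.
Proof.
elim: n s => [|n IH] [|x s] //=.
move=> hs /andP[hx ha]; rewrite in_cons; apply/orP; right.
apply: allpairs_f; first by rewrite mem_iota add1n ltnS.
exact: IH.
Qed.

Lemma size_sumn s : all (fun x => 0 < x)%N s -> (size s <= sumn s)%N.
Proof.
elim: s => //= x s IH /andP[hx hs]; rewrite -add1n leq_add //; exact: IH.
Qed.

Lemma mem_sumn s x : x \in s -> (x <= sumn s)%N.
Proof.
elim: s => //= y s IH; rewrite in_cons => /orP[/eqP ->|/IH h].
  exact: leq_addr.
exact: leq_trans h (leq_addl _ _).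
Qed.

Lemma mem_part k s : all (fun x => 0 < x)%N s -> (sumn s <= k)%N ->
  sort geq s \in partitions_upto k.
Proof.
move=> hp hk.
have ps : perm_eq (sort geq s) s by rewrite perm_sort.
rewrite /partitions_upto mem_undup mem_filter /is_partition.
rewrite sort_sorted; last by move=> x y; apply: leq_total.
rewrite (perm_all _ ps) hp (perm_sumn ps) hk /=.
apply: mem_seqs_upto.
  by rewrite size_sort; apply: leq_trans (size_sumn hp) hk.
apply/allP => x; rewrite mem_sort => hx.
rewrite (allP hp x hx) /=; exact: leq_trans (mem_sumn hx) hk.
Qed.

Lemma collect (R : numFieldType) k (S : seq (rat * seq nat)) :
  all (fun p => all (fun x => 0 < x)%N p.2 && (sumn p.2 <= k)%N) S ->
  exists xi : seq nat -> rat, forall m (a b : nat -> R),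
    \sum_(p <- S) ratr p.1 * qpart m a b p.2 =
    \sum_(nu <- partitions_upto k) ratr (xi nu) * qpart m a b nu.
Proof.
elim: S => [|[c s] S IH] /=.
  exists (fun _ => 0%Q) => m a b; rewrite big_nil big1 // => nu _.
  by rewrite rmorph0 mul0r.
move=> /andP[/andP[hp hk] /IH [xi hxi]].
exists (fun nu => xi nu + (if nu == sort geq s then c else 0%Q)) => m a b.
rewrite big_cons hxi addrC.
under [RHS]eq_bigr do rewrite rmorphD mulrDl.
rewrite big_split /=; congr (_ + _).
rewrite (bigD1_seq (sort geq s)) /=; last first.
- exact: undup_uniq.
- exact: mem_part.
rewrite eqxx big1 ?addr0; last by move=> nu /negbTE ->; rewrite rmorph0 mul0r.
congr (_ * _); rewrite /qpart; apply: perm_big; by rewrite perm_sym perm_sort.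
Qed.


Lemma incr (R : realFieldType) m (a : nat -> R) : (forall i, (i < m)%N -> a i < a i.+1) ->
  forall i j, (i < j)%N -> (j <= m)%N -> a i < a j.
Proof.
move=> h i; elim=> // j IH; rewrite ltnS leq_eqVlt => /orP[/eqP ->|ij] jm.
  by apply: h.
apply: lt_trans (IH ij (ltnW jm)) (h j jm).
Qed.

Unset Implicit Arguments.

Theorem theorem3p2 (R : realFieldType) (k : nat) :
  exists xi : seq nat -> rat,
    forall (m : nat) (a b : nat -> R),
      (forall i, (i < m)%N -> a i < a i.+1) ->
      (forall j, (1 <= j)%N -> (j < m)%N -> b j < b j.+1) ->
      \sum_(0 <= i < m.+1)
         ((\prod_(1 <= j < m.+1) (a i - b j))
          / (\prod_(0 <= j < m.+1 | j != i) (a i - a j)) * a i ^+ k)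
      = \sum_(nu <- partitions_upto k) ratr (xi nu) * qpart m a b nu.
Proof.
have [T hT] := rep R k.
have [v hrep] := hT k (leqnn k).
have hv : all (fun p => all (fun x => 0 < x)%N p.2 && (sumn p.2 <= k)%N) (T k).
  apply/allP => p hp; have /andP[h1 /eqP h2] := allP v p hp.
  by rewrite h1 h2 leqnn.
have [xi hxi] := collect R hv.
exists xi => m a b ha hb.
have hd : dist m a.
  move=> i j im jm; rewrite neq_ltn => /orP[ij|ji].
    by rewrite lt_eqF // (incr ha ij jm).
  by rewrite gt_eqF // (incr ha ji im).
change (Lw m a b k = \sum_(nu <- partitions_upto k) ratr (xi nu) * qpart m a b nu).
by rewrite -hxi -hrep.
Qed.
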